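(* Let $p$ be a prime, $r\in\mathbb{N}$, and $M\in\mathrm{Mat}(d,\mathbb{Z})$. For $s\in\mathbb{N}$ let $\mathrm{Per}_s(M)$ be the set of periodic points of $x\mapsto Mx\bmod p^s$ on $(\mathbb{Z}/p^s\mathbb{Z})^d$, $\ker_s(N)=\{x\in(\mathbb{Z}/p^s\mathbb{Z})^d: Nx\equiv0\pmod{p^s}\}$, and $m(s)$ the smallest $m\ge0$ with $M^{k+m}\equiv M^m\pmod{p^s}$ for some $k\ge1$. Then, as $\mathbb{F}_p$-vector spaces (modules over $\mathbb{Z}/p\mathbb{Z}$), $$\mathrm{Per}_r(M)/p\,\mathrm{Per}_r(M)\simeq\mathrm{Per}_1(M),\qquad \ker_r(M^{m(r)})/p\ker_r(M^{m(r)})\simeq\ker_1(M^{m(1)}),$$ and $$|\mathrm{Per}_r(M)|=p^{rd'}=|\mathrm{Per}_1(M)|^r,\qquad |\ker_r(M^{m(r)})|=p^{r(d-d')}=|\ker_1(M^{m(1)})|^r,$$ where $d'$ is the rank of the free $\mathbb{Z}/p^r\mathbb{Z}$-module $\mathrm{Per}_r(M)$.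
   Context: A point $x$ is periodic if $M^kx\equiv x$ for some $k\ge1$. $\mathrm{Per}_r(M)$ and $\ker_r(M^{m(r)})$ are free $\mathbb{Z}/p^r\mathbb{Z}$-modules with $(\mathbb{Z}/p^r\mathbb{Z})^d=\mathrm{Per}_r(M)\oplus\ker_r(M^{m(r)})$. *)

(* Defs.v *)
From HB Require Import structures.
From mathcomp Require Import all_boot all_order all_algebra.
From mathcomp Require Import boolp.
Set Implicit Arguments. Unset Strict Implicit. Unset Printing Implicit Defensive.
Import GRing.Theory.
Local Open Scope ring_scope.

Definition redmx (n d : nat) (N : 'M[int]_d) : 'M['Z_n]_d :=
  map_mx (fun z : int => z%:~R) N.

Definition Per (n d : nat) (M : 'M[int]_d) : {set 'cV['Z_n]_d} :=
  [set x | `[< exists k : nat, (0 < k)%N /\ redmx n (M ^+ k) *m x = x >]].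

Definition kerM (n d : nat) (N : 'M[int]_d) : {set 'cV['Z_n]_d} :=
  [set x | redmx n N *m x == 0].

Definition preperiodic (n d : nat) (M : 'M[int]_d) (m : nat) : Prop :=
  exists k : nat, (0 < k)%N /\ redmx n (M ^+ (k + m)) = redmx n (M ^+ m).
Definition is_min_preperiod (n d : nat) (M : 'M[int]_d) (m : nat) : Prop :=
  preperiodic n M m /\ forall m', preperiodic n M m' -> (m <= m')%N.

Definition free_of_rank (n d : nat) (S : {set 'cV['Z_n]_d}) (e : nat) : Prop :=
  exists v : 'I_e -> 'cV['Z_n]_d,
    [/\ forall i, v i \in S,
        forall x, x \in S -> exists c : 'I_e -> 'Z_n, x = \sum_i c i *: v i
      & forall c c' : 'I_e -> 'Z_n,
          \sum_i c i *: v i = \sum_i c' i *: v i -> forall i, c i = c' i].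

(* A / q A is isomorphic to B (as groups, equivalently as Z/qZ-modules):
   there is an additive map f on A onto B whose kernel in A is q A
   (first isomorphism theorem). *)
Definition quot_iso (n m d : nat) (q : nat)
    (A : {set 'cV['Z_n]_d}) (B : {set 'cV['Z_m]_d}) : Prop :=
  exists f : 'cV['Z_n]_d -> 'cV['Z_m]_d,
    [/\ {in A &, forall x y, f (x - y) = f x - f y},
        f @: A = B
      & [set x in A | f x == 0] = [set x *+ q | x in A]].

(* Main.v *)
Require Import Defs.
From HB Require Import structures.
From mathcomp Require Import all_boot all_order all_algebra.
From mathcomp Require Import boolp.
Set Implicit Arguments. Unset Strict Implicit. Unset Printing Implicit Defensive.
Import GRing.Theory.
Local Open Scope ring_scope.
Lemma mulmxMn (R : pzRingType) m n q (A : 'M[R]_(m, n)) (B : 'M[R]_(n, q)) k :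
  A *m (B *+ k) = (A *m B) *+ k.
Proof. elim: k => [|k IH]; first by rewrite !mulr0n mulmx0. by rewrite !mulrS mulmxDr IH. Qed.

Lemma ker_fix (R : finComNzRingType) d (E : 'M[R]_d) :
  [set x : 'cV[R]_d | E *m x == 0] = [set x | (1%:M - E) *m x == x].
Proof.
apply/setP => x; rewrite !inE mulmxBl mul1mx; apply/eqP/eqP => h.
  by rewrite h subr0.
by rewrite -[E *m x]opprK -(addKr x (- (E *m x))) h addNr oppr0.
Qed.

Lemma fix_compl (R : pzRingType) d (E : 'M[R]_d) :
  E *m E = E -> (1%:M - E) *m (1%:M - E) = 1%:M - E.
Proof. by move=> h; rewrite mulmxBl mul1mx mulmxBr mulmx1 h subrr subr0. Qed.

Lemma card_fix (R : finComNzRingType) d (E : 'M[R]_d) : E *m E = E ->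
  (#|[set x : 'cV[R]_d | E *m x == x]| * #|[set x : 'cV[R]_d | (E *m x == 0)%R]|)%N
  = (#|R| ^ d)%N.
Proof.
move=> hE; rewrite -cardsX.
rewrite -(card_in_imset (f := fun ab : 'cV[R]_d * 'cV[R]_d => ab.1 + ab.2)).
  rewrite (_ : [set _ | _ in _] = setT) ?cardsT ?card_mx ?muln1 //.
  apply/setP => x; rewrite inE; apply/imsetP; exists (E *m x, x - E *m x).
    by rewrite !inE /= mulmxA hE eqxx mulmxBr mulmxA hE subrr eqxx.
  by rewrite /= addrC subrK.
move=> [a1 b1] [a2 b2]; rewrite !inE /= => /andP[/eqP h1 /eqP h2] /andP[/eqP h3 /eqP h4] h.
have ea : a1 = a2.
  by rewrite -h1 -h3 -[E *m a1]addr0 -h2 -mulmxDr h mulmxDr h4 addr0.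
by move: h; rewrite ea => /addrI ->.
Qed.

Lemma redmxM n d (A B : 'M[int]_d) : redmx n (A * B) = redmx n A *m redmx n B.
Proof. by rewrite /redmx -mulmxE map_mxM. Qed.

Section Idem.
Variables (n d : nat) (M : 'M[int]_d) (m k e : nat).
Hypotheses (hk : (0 < k)%N) (hP : redmx n (M ^+ (k + m)) = redmx n (M ^+ m))
  (hme : (m <= e)%N) (hke : (k %| e)%N) (he : (0 < e)%N).
Let P t := redmx n (M ^+ t).

Lemma PD a b : P (a + b) = P a *m P b.
Proof. by rewrite /P exprD redmxM. Qed.

Lemma Pk t : (m <= t)%N -> P (t + k) = P t.
Proof.
move=> mt; rewrite -(subnK mt) -addnA (addnC m) PD [in RHS]PD.
by rewrite /P hP.
Qed.

Lemma Pjk t j : (m <= t)%N -> P (t + j * k) = P t.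
Proof.
move=> mt; elim: j => [|j IH]; first by rewrite mul0n addn0.
by rewrite mulSn addnCA addnC Pk ?IH // (leq_trans mt) ?leq_addr.
Qed.

Lemma Pe_mult j : P (e + j * e) = P e.
Proof. by rewrite -(divnK hke) mulnA Pjk // divnK. Qed.

Definition Em := redmx n (M ^+ e).

Lemma Em_idem : Em *m Em = Em.
Proof. rewrite /Em -redmxM -exprD; have := Pe_mult 1; rewrite mul1n; exact. Qed.

Lemma Per_Em : Per n M = [set x | Em *m x == x].
Proof.
apply/setP => x; rewrite !inE; apply/asboolP/eqP.
  case=> k' [k'0 Hx].
  have Hj j : P (k' * j) *m x = x.
    elim: j => [|j IH]; first by rewrite muln0 /P expr0 /redmx map_mx1 mul1mx.
    by rewrite mulnS PD -mulmxA IH.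
  rewrite /Em -/(P e) -(Pe_mult k'.-1) -mulSn prednK //.
by move=> Hx; exists e.
Qed.

Lemma Ker_Em : kerM n (M ^+ m) = [set x | Em *m x == 0].
Proof.
apply/setP => x; rewrite !inE; apply/eqP/eqP => Hx.
  by rewrite /Em -(subnK hme) -/(P _) PD -mulmxA Hx mulmx0.
have E2 : P (m + e) = P m by rewrite -(divnK hke) Pjk.
change (P m *m x = 0); rewrite -E2 PD -mulmxA.
by move: Hx; rewrite /Em -/(P e) => ->; rewrite mulmx0.
Qed.
End Idem.
Section Red.
Variables (p r : nat).
Hypothesis (hp : prime p) (hr : (0 < r)%N).

Lemma p_gt1 : (1 < p)%N. Proof. exact: prime_gt1. Qed.
Lemma N_gt1 : (1 < p ^ r)%N.
Proof. by rewrite -(exp1n r) ltn_exp2r ?p_gt1 // -lt0n. Qed.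

Definition red (a : 'Z_(p ^ r)) : 'Z_p := (a : nat)%:R.

Lemma red_mod m : (((m %% (Zp_trunc (p ^ r)).+2)%N)%:R : 'Z_p) = m%:R.
Proof.
rewrite (Zp_cast N_gt1); apply: ord_inj; rewrite !val_Zp_nat ?p_gt1 //.
rewrite modn_dvdm //. by rewrite -{1}(expn1 p) dvdn_exp2l.
Qed.

Lemma redD : {morph red : a b / a + b}.
Proof. move=> a b; rewrite /red /= red_mod natrD; reflexivity. Qed.

Fact red_zmod : zmod_morphism red.
Proof. move=> a b /=. have E : red a = red (a - b) + red b by rewrite -redD subrK.
by rewrite E addrK. Qed.
HB.instance Definition _ := GRing.isZmodMorphism.Build _ _ red red_zmod.

Fact red_monoid : monoid_morphism red.
Proof.
split; first by rewrite /red /= red_mod.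
move=> a b; rewrite /red /= red_mod natrM //.
Qed.
HB.instance Definition _ := GRing.isMonoidMorphism.Build _ _ red red_monoid.

Lemma red_int (z : int) : red z%:~R = z%:~R.
Proof. exact: rmorph_int. Qed.


Lemma cardZ n : (1 < n)%N -> #|{: 'Z_n}| = n.
Proof. by move=> h; rewrite card_ord Zp_cast. Qed.

Local Notation N := (p ^ r)%N.
Local Notation ZN := 'Z_(p ^ r).
Local Notation Zp := 'Z_p.

Definition lift d (y : 'cV[Zp]_d) : 'cV[ZN]_d :=
  map_mx (fun b : Zp => ((b : nat)%:R : ZN)) y.

Lemma rho_lift d (y : 'cV[Zp]_d) : map_mx red (lift y) = y.
Proof.
apply/matrixP => i j; rewrite !mxE rmorph_nat.
exact: natr_Zp.
Qed.

Lemma red_p (a : ZN) : red (a *+ p) = 0.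
Proof. by rewrite rmorphMn -mulr_natr pchar_Zp ?p_gt1 // mulr0. Qed.

Lemma rho_p d (y : 'cV[ZN]_d) : map_mx red (y *+ p) = 0.
Proof. by apply/matrixP => i j; rewrite !mxE mulmxnE red_p. Qed.

Lemma red0_div (a : ZN) : red a = 0 -> exists b : ZN, a = b *+ p.
Proof.
move=> h; exists ((a : nat) %/ p)%:R.
have : ((a : nat) %% p = 0)%N.
  by move: h; rewrite /red => /(congr1 (@nat_of_ord _)); rewrite val_Zp_nat ?p_gt1.
move=> /eqP; rewrite -/(dvdn p a) => dv.
by rewrite -mulrnA divnK // natr_Zp.
Qed.

Lemma rho0_div d (x : 'cV[ZN]_d) : map_mx red x = 0 -> exists y, x = y *+ p.
Proof.
move=> h.
have hij i j : exists b : ZN, x i j == b *+ p.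
  have [b hb] : exists b : ZN, x i j = b *+ p.
    by apply: red0_div; move/matrixP: h => /(_ i j); rewrite !mxE.
  by exists b; apply/eqP.
exists (\matrix_(i, j) xchoose (hij i j)).
apply/matrixP => i j; rewrite mulmxnE mxE.
exact/eqP/(xchooseP (hij i j)).
Qed.

Section Fix.
Variables (d : nat) (EN : 'M[ZN]_d) (Ep : 'M[Zp]_d).
Hypotheses (hEN : EN *m EN = EN) (hEp : map_mx red EN = Ep).

Lemma rhoE (x : 'cV[ZN]_d) : map_mx red (EN *m x) = Ep *m map_mx red x.
Proof. by rewrite map_mxM hEp. Qed.

Let FN := [set x : 'cV[ZN]_d | EN *m x == x].
Let Fp := [set y : 'cV[Zp]_d | Ep *m y == y].

Lemma fixN_surj y : y \in Fp -> exists2 x, x \in FN & map_mx red x = y.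
Proof.
rewrite inE => /eqP hy; exists (EN *m lift y).
  by rewrite inE mulmxA hEN.
by rewrite rhoE rho_lift.
Qed.

Lemma fixN_ker x : x \in FN -> map_mx red x = 0 -> exists2 z, z \in FN & x = z *+ p.
Proof.
rewrite inE => /eqP hx /rho0_div [y hy]; subst x.
exists (EN *m y); first by rewrite inE mulmxA hEN.
by move: hx; rewrite mulmxMn => ->.
Qed.

Lemma quot_fix : quot_iso p FN Fp.
Proof.
exists (map_mx red); split.
- by move=> x y _ _; rewrite map_mxB.
- apply/eqP; rewrite eqEsubset; apply/andP; split; apply/subsetP.
    move=> _ /imsetP [x hx ->]; move: hx; rewrite !inE => /eqP hx.
    by rewrite -rhoE hx.
  move=> y /fixN_surj [x hx <-]; exact: imset_f.
- apply/setP => x; rewrite inE; apply/andP/imsetP.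
    by case=> hx /eqP h0; have [z hz ->] := fixN_ker hx h0; exists z.
  case=> z hz ->; split; last by rewrite rho_p.
  by move: hz; rewrite !inE mulmxMn => /eqP ->.
Qed.

Lemma card_free d' : free_of_rank FN d' ->
  #|FN| = (p ^ (r * d'))%N /\ #|Fp| = (p ^ d')%N.
Proof.
case=> v [vin vspan vinj].
have Nlin (c : 'I_d' -> ZN) : EN *m (\sum_i c i *: v i) = \sum_i c i *: v i.
  rewrite mulmx_sumr; apply: eq_bigr => i _; rewrite -scalemxAr.
  by move: (vin i); rewrite inE => /eqP ->.
split.
  rewrite expnM -[X in _ = (X ^ _)%N](cardZ N_gt1) -[in RHS](card_ord d') -card_ffun -cardsT.
  rewrite -(card_in_imset (f := fun c : {ffun 'I_d' -> ZN} => \sum_i c i *: v i)).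
    apply: eq_card => x; apply/idP/imsetP.
      move=> /vspan [c ->]; exists [ffun i => c i]; first by rewrite inE.
      by apply: eq_bigr => i _; rewrite ffunE.
    by case=> c _ ->; rewrite inE Nlin.
  by move=> c1 c2 _ _ /vinj h; apply/ffunP => i; apply: h.
have plin (c : 'I_d' -> Zp) : Ep *m (\sum_i c i *: map_mx red (v i)) = \sum_i c i *: map_mx red (v i).
  rewrite mulmx_sumr; apply: eq_bigr => i _; rewrite -scalemxAr -rhoE.
  by move: (vin i); rewrite inE => /eqP ->.
rewrite -[p in RHS](cardZ p_gt1) -[in RHS](card_ord d') -card_ffun -cardsT.
rewrite -(card_in_imset (f := fun c : {ffun 'I_d' -> Zp} => \sum_i c i *: map_mx red (v i))).
  apply: eq_card => y; apply/idP/imsetP.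
    move=> /fixN_surj [x /vspan [c ->] <-].
    exists [ffun i => red (c i)]; first by rewrite inE.
    rewrite map_mx_sum; apply: eq_bigr => i _; rewrite ffunE map_mxZ //.
  by case=> c _ ->; rewrite inE plin.
move=> c1 c2 _ _ h; apply/ffunP => i.
pose L i := ((c1 i : nat)%:R - (c2 i : nat)%:R : ZN).
have redL j : red (L j) = c1 j - c2 j by rewrite rmorphB !rmorph_nat !natr_Zp.
have xin : \sum_j L j *: v j \in FN by rewrite inE Nlin.
have x0 : map_mx red (\sum_j L j *: v j) = 0.
  rewrite map_mx_sum (eq_bigr (fun j => c1 j *: map_mx red (v j) - c2 j *: map_mx red (v j))).
    by rewrite sumrB h subrr.
  by move=> j _; rewrite map_mxZ /= redL scalerBl.
have [z /vspan [b ->] hz] := fixN_ker xin x0.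
have hL : L i = b i *+ p.
  apply: (vinj L (fun j => b j *+ p)).
  by rewrite hz -sumrMnl; apply: eq_bigr => j _; rewrite scalerMnl.
by have := congr1 red hL; rewrite redL red_p => /eqP; rewrite subr_eq0 => /eqP.
Qed.
End Fix.
End Red.

Lemma arith (p a b K : nat) : (1 < p)%N -> (0 < K)%N -> (p ^ a * K)%N = (p ^ b)%N ->
  (a <= b)%N /\ K = (p ^ (b - a))%N.
Proof.
move=> hp hK h.
have ab : (a <= b)%N by rewrite -(leq_exp2l _ _ hp) -h leq_pmulr.
split=> //; apply/eqP.
have pa : (0 < p ^ a)%N by rewrite expn_gt0 (ltnW hp).
by rewrite -(eqn_pmul2l pa) h -expnD subnKC.
Qed.

Unset Implicit Arguments.
Set Strict Implicit.

Theorem corollary3p9 (p r d : nat) (M : 'M[int]_d) (mr m1 d' : nat) :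
  prime p -> (0 < r)%N ->
  is_min_preperiod (p ^ r) M mr ->
  is_min_preperiod p M m1 ->
  free_of_rank (Per (p ^ r) M) d' ->
  [/\ quot_iso p (Per (p ^ r) M) (Per p M),
      quot_iso p (kerM (p ^ r) (M ^+ mr)) (kerM p (M ^+ m1)),
      #|Per (p ^ r) M| = (p ^ (r * d'))%N /\ (p ^ (r * d'))%N = (#|Per p M| ^ r)%N
    & #|kerM (p ^ r) (M ^+ mr)| = (p ^ (r * (d - d')))%N /\
      (p ^ (r * (d - d')))%N = (#|kerM p (M ^+ m1)| ^ r)%N].
Proof.
move=> hp hr [[kr [hkr hPr]] _] [[k1 [hk1 hP1]] _].
set e := (kr * k1 * (mr + m1).+1)%N.
have he0 : (0 < e)%N by rewrite !muln_gt0 hkr hk1.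
have hle : ((mr + m1).+1 <= e)%N by rewrite /e leq_pmull // muln_gt0 hkr hk1.
have hmre : (mr <= e)%N := leq_trans (leq_addr m1 mr) (ltnW hle).
have hm1e : (m1 <= e)%N := leq_trans (leq_addl mr m1) (ltnW hle).
have hkre : (kr %| e)%N by rewrite /e -mulnA dvdn_mulr.
have hk1e : (k1 %| e)%N by rewrite /e mulnAC dvdn_mull.
rewrite (Per_Em hPr hmre hkre he0) (Ker_Em hPr hmre hkre).
rewrite (Per_Em hP1 hm1e hk1e he0) (Ker_Em hP1 hm1e hk1e).
have hEN := Em_idem hPr hmre hkre.
have hEp := Em_idem hP1 hm1e hk1e.
set EN := Em (p ^ r) M e in hEN *.
set Ep := Em p M e in hEp *.
have hred : map_mx (red (p:=p) (r:=r)) EN = Ep.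
  rewrite /EN /Ep /Em /redmx -map_mx_comp; apply: eq_map_mx => z /=.
  exact: red_int.
move=> hfree.
have [cN cP] := card_free hp hr hEN hred hfree.
have gt1N := N_gt1 hp hr. have gt1p := p_gt1 hp.
have kN := card_fix hEN; rewrite cardZ // -expnM in kN.
have kP := card_fix hEp; rewrite cardZ // in kP.
have pos (n : nat) (E : 'M['Z_n]_d) : (0 < #|[set x : 'cV['Z_n]_d | (E *m x == 0)%R]|)%N.
  by rewrite card_gt0; apply/set0Pn; exists 0; rewrite inE mulmx0.
rewrite cN in kN; rewrite cP in kP.
have [_ KN] := arith gt1p (pos _ _) kN.
have [_ KP] := arith gt1p (pos _ _) kP.
have hred' : map_mx (red (p:=p) (r:=r)) (1%:M - EN) = 1%:M - Ep.
  rewrite map_mxB map_mx1 //; congr (_ - _); exact: hred.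
split.
- have := quot_fix hp hr hEN hred; apply.
- rewrite !ker_fix; have := quot_fix hp hr (fix_compl hEN) hred'; apply.
- by rewrite cN cP -expnM mulnC.
- by rewrite KN KP -mulnBr -expnM mulnC.
Qed.
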